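(* If a $T_1$-space $X$ has a regular base at non-isolated points, then (1) $X$ is proto-metrizable, and (2) $X$ is a $\gamma$-space.
   Context: $I(X)$ is the set of isolated points, $\mathcal{I}(X)=\{\{x\}:x\in I(X)\}$. A base $\mathcal{B}$ is regular at $x$ if for every neighborhood $U$ of $x$ there is an open $V$ with $x\in V\subset U$ such that $\{B\in\mathcal{B}: B\cap V\neq\emptyset,\ B\not\subset U\}$ is finite; a regular base at non-isolated points is regular at every $x\in X\setminus I(X)$. An ortho-base of $X$ is a base $\mathcal{B}$ such that for every $\mathcal{A}\subset\mathcal{B}$, either $\bigcap\mathcal{A}$ is open in $X$, or $\bigcap\mathcal{A}=\{x\}$ for some $x\notin I(X)$ and $\mathcal{A}$ is a neighborhood base at $x$. $X$ is proto-metrizable if it is (Hausdorff) paracompact and has an ortho-base. A $g$-function assigns to each $n\in\mathbb{N}$, $x\in X$ an open set $g(n,x)\ni x$; $X$ is a $\gamma$-space if there is a $g$-function such that for each $x\in X$ and sequences $\{x_n\},\{y_n\}$ with $x_n\in g(n,y_n)$ and $y_n\in g(n,x)$ for all $n$, we have $x_n\to x$. *)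

(* Defs.v *)
From Stdlib Require Import List Classical.

Record topology (X : Type) : Type := Topology {
  is_open : (X -> Prop) -> Prop;
  open_full : is_open (fun _ => True);
  open_inter : forall U V, is_open U -> is_open V -> is_open (fun x => U x /\ V x);
  open_union : forall F : (X -> Prop) -> Prop,
      (forall U, F U -> is_open U) -> is_open (fun x => exists U, F U /\ U x)
}.
Arguments is_open {X} t U.

Section Topo.
Context {X : Type} (T : topology X).

Definition subset (A B : X -> Prop) : Prop := forall x, A x -> B x.

Definition nbhd (x : X) (N : X -> Prop) : Prop :=
  exists U, is_open T U /\ U x /\ subset U N.

Definition finite_family (F : (X -> Prop) -> Prop) : Prop :=
  exists l : list (X -> Prop), forall B, F B -> In B l.

Definition T1 : Prop :=
  forall x y : X, x <> y -> exists U, is_open T U /\ U x /\ ~ U y.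

Definition hausdorff : Prop :=
  forall x y : X, x <> y -> exists U V, is_open T U /\ is_open T V /\ U x /\ V y /\
      (forall z, ~ (U z /\ V z)).

Definition isolated (x : X) : Prop := is_open T (fun y => y = x).

Definition is_base (B : (X -> Prop) -> Prop) : Prop :=
  (forall U, B U -> is_open T U) /\
  (forall U x, is_open T U -> U x -> exists V, B V /\ V x /\ subset V U).

Definition regular_at (B : (X -> Prop) -> Prop) (x : X) : Prop :=
  forall U, nbhd x U -> exists V, is_open T V /\ V x /\ subset V U /\
    finite_family (fun W => B W /\ (exists z, W z /\ V z) /\ ~ subset W U).

Definition regular_base_at_nonisolated (B : (X -> Prop) -> Prop) : Prop :=
  is_base B /\ forall x, ~ isolated x -> regular_at B x.

Definition nbhd_base_at (A : (X -> Prop) -> Prop) (x : X) : Prop :=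
  (forall W, A W -> nbhd x W) /\ (forall U, nbhd x U -> exists W, A W /\ subset W U).

Definition ortho_base (B : (X -> Prop) -> Prop) : Prop :=
  is_base B /\
  forall A : (X -> Prop) -> Prop, (forall W, A W -> B W) ->
    is_open T (fun y => forall W, A W -> W y) \/
    exists x, ~ isolated x /\ (forall y, (forall W, A W -> W y) <-> y = x) /\
              nbhd_base_at A x.

Definition open_cover (C : (X -> Prop) -> Prop) : Prop :=
  (forall U, C U -> is_open T U) /\ (forall x, exists U, C U /\ U x).

Definition locally_finite (R : (X -> Prop) -> Prop) : Prop :=
  forall x, exists V, is_open T V /\ V x /\
    finite_family (fun W => R W /\ exists z, W z /\ V z).

Definition paracompact : Prop :=
  hausdorff /\
  forall C, open_cover C -> exists R, open_cover R /\
    (forall W, R W -> exists U, C U /\ subset W U) /\ locally_finite R.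

Definition proto_metrizable : Prop :=
  paracompact /\ exists B, ortho_base B.

Definition converges (s : nat -> X) (x : X) : Prop :=
  forall U, is_open T U -> U x -> exists N, forall n, N <= n -> U (s n).

Definition g_function (g : nat -> X -> X -> Prop) : Prop :=
  forall n x, is_open T (g n x) /\ g n x x.

Definition gamma_space : Prop :=
  exists g, g_function g /\
    forall (x : X) (xs ys : nat -> X),
      (forall n, g n (ys n) (xs n) /\ g n x (ys n)) -> converges xs x.

End Topo.

(* Main.v *)
Require Import Defs.
From Stdlib Require Import List Classical Lia FunctionalExtensionality PropExtensionality ClassicalEpsilon.

Lemma set_ext {X : Type} (A B : X -> Prop) : (forall x, A x <-> B x) -> A = B.
Proof.
  intro H; apply functional_extensionality; intro x; apply propositional_extensionality; apply H.
Qed.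

Lemma open_ext {X : Type} (T : topology X) (A B : X -> Prop) :
  is_open T A -> (forall x, A x <-> B x) -> is_open T B.
Proof. intros HA H; rewrite <- (set_ext A B H); exact HA. Qed.

Lemma open_all_isolated {X : Type} (T : topology X) (S : X -> Prop) :
  (forall x, S x -> isolated T x) -> is_open T S.
Proof.
  intro H.
  apply (open_ext T (fun x => exists U, (exists y, S y /\ U = (fun z => z = y)) /\ U x)).
  - apply open_union. intros U [y [Hy ->]]. apply H; exact Hy.
  - intro x; split.
    + intros [U [[y [Hy ->]] Hx]]. subst; exact Hy.
    + intro Hx. exists (fun z => z = x). split; [exists x; split; auto | reflexivity].
Qed.

Lemma open_compl_point {X : Type} (T : topology X) (y : X) :
  T1 T -> is_open T (fun z => z <> y).
Proof.
  intro H1.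
  apply (open_ext T (fun x => exists U, (is_open T U /\ ~ U y) /\ U x)).
  - apply open_union. intros U [HU _]; exact HU.
  - intro x; split.
    + intros [U [[_ Hy] Hx]] ->. contradiction.
    + intro Hx. destruct (H1 x y Hx) as [U [HU [HUx HUy]]]. exists U; auto.
Qed.

Lemma open_list_inter {X : Type} (T : topology X) (P : (X -> Prop) -> Prop) (l : list (X -> Prop)) :
  (forall W, In W l -> P W -> is_open T W) ->
  is_open T (fun z => forall W, In W l -> P W -> W z).
Proof.
  induction l as [|a l IH]; intro H.
  - apply (open_ext T (fun _ => True)); [apply open_full|].
    intro x; split; [intros _ W []| auto].
  - assert (Hl : is_open T (fun z => forall W, In W l -> P W -> W z)).
    { apply IH. intros W HW; apply H; right; exact HW. }
    destruct (classic (P a)) as [Pa|nPa].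
    + apply (open_ext T (fun z => a z /\ (forall W, In W l -> P W -> W z))).
      * apply open_inter; [apply H; [left; reflexivity| exact Pa] | exact Hl].
      * intro z; split.
        -- intros [Ha Hr] W [<-|HW] PW; [exact Ha| exact (Hr W HW PW)].
        -- intro Hz; split; [apply Hz; [left; reflexivity| exact Pa]|].
           intros W HW PW; apply Hz; [right; exact HW| exact PW].
    + apply (open_ext T _ _ Hl). intro z; split.
      * intros Hz W [<-|HW] PW; [contradiction| exact (Hz W HW PW)].
      * intros Hz W HW PW; apply Hz; [right|]; auto.
Qed.

Lemma open_finite_inter {X : Type} (T : topology X) (A : (X -> Prop) -> Prop) (l : list (X -> Prop)) :
  (forall W, A W -> In W l) -> (forall W, A W -> is_open T W) ->
  is_open T (fun z => forall W, A W -> W z).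
Proof.
  intros Hl Ho.
  apply (open_ext T _ _ (open_list_inter T A l (fun W _ HA => Ho W HA))).
  intro z; split.
  - intros H W HA. exact (H W (Hl W HA) HA).
  - intros H W _ HA. exact (H W HA).
Qed.

Lemma nonisolated_other {X : Type} (T : topology X) (x : X) (W : X -> Prop) :
  ~ isolated T x -> is_open T W -> W x -> exists y, W y /\ y <> x.
Proof.
  intros Hni HW Hx. apply NNPP; intro Hn. apply Hni. unfold isolated.
  apply (open_ext T W _ HW). intro z; split.
  - intro Hz. apply NNPP; intro Hzx. apply Hn. exists z; auto.
  - intros ->; exact Hx.
Qed.

Lemma finite_two {X : Type} (T : topology X) (B : (X -> Prop) -> Prop) (z y : X) :
  T1 T -> regular_base_at_nonisolated T B -> ~ isolated T z -> y <> z ->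
  exists L, forall W, B W -> W z -> W y -> In W L.
Proof.
  intros H1 [Hb Hr] Hz Hyz.
  destruct (Hr z Hz (fun w => w <> y)) as [V [HV [HVz [HVU [L HL]]]]].
  - exists (fun w => w <> y). split; [apply open_compl_point; auto|]. split; [auto| intros w Hw; exact Hw].
  - exists L. intros W HW Wz Wy. apply HL. split; [exact HW|]. split.
    + exists z; auto.
    + intro Hs. apply (Hs y Wy). reflexivity.
Qed.

Lemma sup_finite {X : Type} (T : topology X) (B : (X -> Prop) -> Prop) (Z : X -> Prop) (w : X) :
  T1 T -> regular_base_at_nonisolated T B -> B Z -> Z w -> ~ isolated T w ->
  exists L, forall W, B W -> subset Z W -> In W L.
Proof.
  intros H1 Hrb HZ Zw Hw.
  destruct Hrb as [[Hbo Hbb] Hr] eqn:E.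
  destruct (nonisolated_other T w Z Hw (Hbo Z HZ) Zw) as [y [Zy Hyw]].
  destruct (finite_two T B w y H1 Hrb Hw Hyw) as [L HL].
  exists L. intros W HW HZW. apply HL; auto.
Qed.

Lemma hausdorff_thm {X : Type} (T : topology X) (B : (X -> Prop) -> Prop) :
  T1 T -> regular_base_at_nonisolated T B -> hausdorff T.
Proof.
  intros H1 Hrb x y Hxy.
  destruct (classic (isolated T x)) as [Ix|Nx].
  { exists (fun z => z = x), (fun z => z <> x). split; [exact Ix|]. split; [apply open_compl_point; auto|].
    split; [reflexivity|]. split; [auto|]. intros z [Hz1 Hz2]; contradiction. }
  destruct (classic (isolated T y)) as [Iy|Ny].
  { exists (fun z => z <> y), (fun z => z = y). split; [apply open_compl_point; auto|]. split; [exact Iy|].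
    split; [auto|]. split; [reflexivity|]. intros z [Hz1 Hz2]; contradiction. }
  pose proof Hrb as [[Hbo Hbb] Hr].
  destruct (Hr x Nx (fun w => w <> y)) as [V [HV [HVx [HVU [L HL]]]]].
  { exists (fun w => w <> y). split; [apply open_compl_point; auto|]. split; [auto| intros w Hw; exact Hw]. }
  destruct (classic (exists W, B W /\ W y /\ ~ exists z, W z /\ V z)) as [[W [BW [Wy HWV]]]|Hn].
  - exists V, W. split; [exact HV|]. split; [apply Hbo; exact BW|]. split; [exact HVx|]. split; [exact Wy|].
    intros z [Vz Wz]. apply HWV. exists z; auto.
  - exfalso. apply Ny.
    assert (HinL : forall W, B W -> W y -> In W L).
    { intros W BW Wy. apply HL. split; [exact BW|]. split.
      - apply NNPP; intro Hne. apply Hn. exists W; auto.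
      - intro Hs. apply (Hs y Wy). reflexivity. }
    apply (open_ext T (fun v => forall W, In W L -> (B W /\ W y) -> W v)).
    + apply open_list_inter. intros W _ [BW _]. apply Hbo; exact BW.
    + intro v; split.
      * intro Hv. apply NNPP; intro Hvy.
        destruct (Hbb (fun w => w <> v) y (open_compl_point T v H1) (fun e => Hvy (eq_sym e))) as [W [BW [Wy WU]]].
        apply (WU v); [apply (Hv W (HinL W BW Wy)); auto| reflexivity].
      * intros -> W _ [_ Wy]; exact Wy.
Qed.

Lemma ortho_thm {X : Type} (T : topology X) (B : (X -> Prop) -> Prop) :
  T1 T -> regular_base_at_nonisolated T B -> ortho_base T B.
Proof.
  intros H1 Hrb. pose proof Hrb as [[Hbo Hbb] Hr].
  split; [split; auto|].
  intros A HAB.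
  destruct (classic (forall z, (forall W, A W -> W z) -> isolated T z)) as [Hall|Hn].
  { left. apply open_all_isolated. exact Hall. }
  apply not_all_ex_not in Hn. destruct Hn as [z Hz].
  apply imply_to_and in Hz. destruct Hz as [Iz Nz].
  destruct (classic (exists y, (forall W, A W -> W y) /\ y <> z)) as [[y [Iy Hyz]]|Hno].
  { left. destruct (finite_two T B z y H1 Hrb Nz Hyz) as [L HL].
    apply (open_finite_inter T A L).
    - intros W HW. apply HL; [apply HAB, HW| apply Iz, HW| apply Iy, HW].
    - intros W HW. apply Hbo, HAB, HW. }
  assert (Hsing : forall y, (forall W, A W -> W y) <-> y = z).
  { intro y; split.
    - intro Hy. apply NNPP; intro Hyz. apply Hno. exists y; auto.
    - intros ->; exact Iz. }
  right. exists z. split; [exact Nz|]. split; [exact Hsing|]. split.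
  - intros W HW. exists W. split; [apply Hbo, HAB, HW|]. split; [apply Iz, HW| intros w Hw; exact Hw].
  - intros U HU. apply NNPP; intro Hne.
    destruct (Hr z Nz U HU) as [V [HV [HVz [HVU [L HL]]]]].
    apply Nz. unfold isolated.
    apply (open_ext T (fun y => forall W, A W -> W y)).
    + apply (open_finite_inter T A L).
      * intros W HW. apply HL. split; [apply HAB, HW|]. split.
        -- exists z; split; [apply Iz, HW| exact HVz].
        -- intro Hs. apply Hne. exists W; auto.
      * intros W HW. apply Hbo, HAB, HW.
    + exact Hsing.
Qed.

Lemma remove_one {A : Type} (a : A) (l : list A) :
  In a l -> exists l', length l' < length l /\ forall b, In b l -> b <> a -> In b l'.
Proof.
  induction l as [|c l IH]; intros Ha; [destruct Ha|].
  destruct (classic (c = a)) as [->|Hca].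
  - exists l. split; [simpl; lia|]. intros b [<-|Hb] Hba; [contradiction| exact Hb].
  - destruct Ha as [Hca'|Ha]; [contradiction|].
    destruct (IH Ha) as [l' [Hlen Hl']]. exists (c :: l'). split; [simpl; lia|].
    intros b [<-|Hb] Hba; [left; reflexivity| right; apply Hl'; auto].
Qed.

Lemma max_exists_gen {A : Type} (P : A -> Prop) (le : A -> A -> Prop)
  (le_refl : forall a, le a a) (le_trans : forall a b c, le a b -> le b c -> le a c) :
  forall n l W, length l <= n -> P W -> (forall W', P W' -> le W W' -> In W' l) ->
  exists M, P M /\ le W M /\ forall M', P M' -> le M M' -> le M' M.
Proof.
  induction n as [|n IH]; intros l W Hlen PW Hl.
  - destruct l; [|simpl in Hlen; lia]. destruct (Hl W PW (le_refl W)).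
  - destruct (classic (exists W', P W' /\ le W W' /\ ~ le W' W)) as [[W' [PW' [HWW' HW'W]]]|Hno].
    + destruct (remove_one W l (Hl W PW (le_refl W))) as [l' [Hlen' Hl']].
      destruct (IH l' W') as [M [PM [HW'M HM]]].
      * lia.
      * exact PW'.
      * intros W'' PW'' HW'W''. apply Hl'.
        -- apply Hl; [exact PW''| exact (le_trans _ _ _ HWW' HW'W'')].
        -- intros ->. contradiction.
      * exists M. split; [exact PM|]. split; [exact (le_trans _ _ _ HWW' HW'M)| exact HM].
    + exists W. split; [exact PW|]. split; [apply le_refl|].
      intros M' PM' HM'. apply NNPP; intro Hn. apply Hno. exists M'; auto.
Qed.


Definition FF {X : Type} (T : topology X) (B C : (X -> Prop) -> Prop) (W : X -> Prop) : Prop :=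
  B W /\ (exists y, W y /\ ~ isolated T y) /\ exists U, C U /\ subset W U.

Definition MaxF {X : Type} (T : topology X) (B C : (X -> Prop) -> Prop) (M : X -> Prop) : Prop :=
  FF T B C M /\ forall M', FF T B C M' -> subset M M' -> M' = M.

Definition LF {X : Type} (T : topology X) (B C : (X -> Prop) -> Prop) (z : X) : Prop :=
  exists V, is_open T V /\ V z /\ finite_family (fun M => MaxF T B C M /\ exists w, M w /\ V w).

Lemma max_above {X : Type} (T : topology X) (B C : (X -> Prop) -> Prop) (W : X -> Prop) :
  T1 T -> regular_base_at_nonisolated T B -> FF T B C W -> exists M, MaxF T B C M /\ subset W M.
Proof.
  intros H1 Hrb HW. pose proof HW as [BW [[w [Ww Nw]] _]].
  destruct (sup_finite T B W w H1 Hrb BW Ww Nw) as [L HL].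
  destruct (max_exists_gen (FF T B C) subset (fun a x h => h) (fun a b c h1 h2 x hx => h2 x (h1 x hx))
     (length L) L W (le_n _) HW) as [M [FM [HWM HM]]].
  - intros W' [BW' _] HWW'. apply HL; auto.
  - exists M. split; [|exact HWM]. split; [exact FM|].
    intros M' FM' HMM'. apply set_ext. intro x; split; [apply (HM M' FM' HMM')| apply HMM'].
Qed.

Lemma nonisol_in_max {X : Type} (T : topology X) (B C : (X -> Prop) -> Prop) (z : X) :
  T1 T -> regular_base_at_nonisolated T B -> open_cover T C -> ~ isolated T z ->
  exists M, MaxF T B C M /\ M z.
Proof.
  intros H1 Hrb [HCo HCc] Nz. pose proof Hrb as [[Hbo Hbb] Hr].
  destruct (HCc z) as [U [CU Uz]].
  destruct (Hbb U z (HCo U CU) Uz) as [W [BW [Wz WU]]].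
  destruct (max_above T B C W H1 Hrb) as [M [HM HWM]].
  - split; [exact BW|]. split; [exists z; auto| exists U; auto].
  - exists M; split; [exact HM| apply HWM, Wz].
Qed.

Lemma nonisol_LF {X : Type} (T : topology X) (B C : (X -> Prop) -> Prop) (z : X) :
  T1 T -> regular_base_at_nonisolated T B -> open_cover T C -> ~ isolated T z -> LF T B C z.
Proof.
  intros H1 Hrb HC Nz. pose proof Hrb as [[Hbo Hbb] Hr].
  destruct (nonisol_in_max T B C z H1 Hrb HC Nz) as [M0 [HM0 M0z]].
  destruct (Hr z Nz M0) as [V [HV [HVz [HVU [L HL]]]]].
  - exists M0. split; [apply Hbo, HM0|]. split; [exact M0z| intros w Hw; exact Hw].
  - exists V. split; [exact HV|]. split; [exact HVz|].
    exists (M0 :: L). intros M [HM HMV].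
    destruct (classic (subset M M0)) as [HS|HS].
    + left. apply (proj2 HM M0 (proj1 HM0) HS).
    + right. apply HL. split; [apply HM|]. split; [exact HMV| exact HS].
Qed.

Lemma LF_open {X : Type} (T : topology X) (B C : (X -> Prop) -> Prop) : is_open T (LF T B C).
Proof.
  apply (open_ext T (fun x => exists U, (is_open T U /\
     finite_family (fun M => MaxF T B C M /\ exists w, M w /\ U w)) /\ U x)).
  - apply open_union. intros U [HU _]; exact HU.
  - intro x; split.
    + intros [U [[HU HF] Ux]]. exists U; auto.
    + intros [U [HU [Ux HF]]]. exists U; auto.
Qed.

Definition RR {X : Type} (T : topology X) (B C : (X -> Prop) -> Prop) (W : X -> Prop) : Prop :=
  (exists M, MaxF T B C M /\ W = (fun y => M y /\ LF T B C y)) \/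
  (exists x, isolated T x /\ ~ (exists M, MaxF T B C M /\ M x /\ LF T B C x) /\ W = (fun y => y = x)).

Lemma paracompact_thm {X : Type} (T : topology X) (B : (X -> Prop) -> Prop) :
  T1 T -> regular_base_at_nonisolated T B -> paracompact T.
Proof.
  intros H1 Hrb. pose proof Hrb as [[Hbo Hbb] Hr].
  split; [exact (hausdorff_thm T B H1 Hrb)|].
  intros C HC. exists (RR T B C). split; [split|split].
  - intros W [[M [HM ->]]|[x [Ix [_ ->]]]].
    + apply open_inter; [apply Hbo, HM| apply LF_open].
    + exact Ix.
  - intro z. destruct (classic (isolated T z)) as [Iz|Nz].
    + destruct (classic (exists M, MaxF T B C M /\ M z /\ LF T B C z)) as [[M [HM [Mz Lz]]]|Hno].
      * exists (fun y => M y /\ LF T B C y). split; [left; exists M; auto| auto].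
      * exists (fun y => y = z). split; [right; exists z; auto| reflexivity].
    + destruct (nonisol_in_max T B C z H1 Hrb HC Nz) as [M [HM Mz]].
      exists (fun y => M y /\ LF T B C y). split; [left; exists M; auto|].
      split; [exact Mz| apply (nonisol_LF T B C z H1 Hrb HC Nz)].
  - intros W [[M [HM ->]]|[x [Ix [_ ->]]]].
    + destruct HM as [[_ [_ [U [CU HMU]]]] _]. exists U. split; [exact CU|]. intros y [My _]; apply HMU, My.
    + destruct HC as [_ HCc]. destruct (HCc x) as [U [CU Ux]]. exists U. split; [exact CU|].
      intros y ->; exact Ux.
  - intro z. destruct (classic (LF T B C z)) as [Lz|NLz].
    + pose proof Lz as [V0 [HV0 [V0z [l Hl]]]].
      destruct (classic (exists M0, MaxF T B C M0 /\ M0 z)) as [[M0 [HM0 M0z]]|Hno].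
      * exists (fun w => V0 w /\ M0 w /\ LF T B C w). split.
        { apply open_inter; [exact HV0| apply open_inter; [apply Hbo, HM0| apply LF_open]]. }
        split; [auto|].
        exists (map (fun M => fun y => M y /\ LF T B C y) l).
        intros W [[[M [HM ->]]|[x [Ix [Hnx ->]]]] [w [Ww [V0w [M0w Lw]]]]].
        -- apply (in_map (fun M => fun y => M y /\ LF T B C y)). apply Hl. split; [exact HM| exists w; split; [apply Ww| exact V0w]].
        -- exfalso. subst w. apply Hnx. exists M0; auto.
      * assert (Iz : isolated T z).
        { apply NNPP; intro Nz. apply Hno. apply (nonisol_in_max T B C z H1 Hrb HC Nz). }
        exists (fun w => V0 w /\ w = z). split; [apply open_inter; [exact HV0| exact Iz]|].
        split; [auto|].
        exists ((fun y => y = z) :: map (fun M => fun y => M y /\ LF T B C y) l).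
        intros W [[[M [HM ->]]|[x [Ix [Hnx ->]]]] [w [Ww [V0w wz]]]].
        -- right. apply (in_map (fun M => fun y => M y /\ LF T B C y)). apply Hl. split; [exact HM| exists w; split; [apply Ww| exact V0w]].
        -- left. subst. reflexivity.
    + assert (Iz : isolated T z).
      { apply NNPP; intro Nz. apply NLz. apply (nonisol_LF T B C z H1 Hrb HC Nz). }
      exists (fun w => w = z). split; [exact Iz|]. split; [reflexivity|].
      exists ((fun y => y = z) :: nil).
      intros W [[[M [HM ->]]|[x [Ix [Hnx ->]]]] [w [Ww wz]]].
      -- subst. exfalso. apply NLz, Ww.
      -- left. subst. reflexivity.
Qed.

Definition Next {X : Type} (B : (X -> Prop) -> Prop) (x : X) (W W' : X -> Prop) : Prop :=
  B W' /\ W' x /\ subset W' W /\ ~ subset W W' /\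
  forall Z, B Z -> Z x -> subset Z W \/ subset W' Z.

Lemma next_exists {X : Type} (T : topology X) (B : (X -> Prop) -> Prop) :
  T1 T -> regular_base_at_nonisolated T B ->
  forall x W, exists W', ~ isolated T x -> B W -> W x -> Next B x W W'.
Proof.
  intros H1 Hrb x W. pose proof Hrb as [[Hbo Hbb] Hr].
  destruct (classic (~ isolated T x /\ B W /\ W x)) as [[Nx [BW Wx]]|Hno].
  2:{ exists W. intros a b c. exfalso. apply Hno; auto. }
  destruct (Hr x Nx W) as [V [HV [HVx [HVW [E HE]]]]].
  { exists W. split; [apply Hbo, BW|]. split; [exact Wx| intros w Hw; exact Hw]. }
  destruct (nonisolated_other T x W Nx (Hbo W BW) Wx) as [y [Wy Hyx]].
  set (S := fun z => W z /\ (V z /\ (z <> y /\ (forall Z, In Z E -> (B Z /\ Z x) -> Z z)))).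
  assert (HS : is_open T S).
  { apply open_inter; [apply Hbo, BW|]. apply open_inter; [exact HV|].
    apply open_inter; [apply open_compl_point; exact H1|].
    apply open_list_inter. intros Z _ [BZ _]. apply Hbo, BZ. }
  assert (Sx : S x).
  { split; [exact Wx|]. split; [exact HVx|]. split; [intro e; apply Hyx; symmetry; exact e|].
    intros Z _ [_ Zx]; exact Zx. }
  destruct (Hbb S x HS Sx) as [W' [BW' [W'x W'S]]].
  exists W'. intros _ _ _. split; [exact BW'|]. split; [exact W'x|]. split.
  { intros w Hw. exact (proj1 (W'S w Hw)). }
  split.
  { intro Hs. apply (proj1 (proj2 (proj2 (W'S y (Hs y Wy))))). reflexivity. }
  intros Z BZ Zx. destruct (classic (subset Z W)) as [HZ|HZ]; [left; exact HZ|right].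
  intros w Hw. apply (proj2 (proj2 (proj2 (W'S w Hw)))).
  - apply HE. split; [exact BZ|]. split; [exists x; auto| exact HZ].
  - split; [exact BZ| exact Zx].
Qed.

Definition chain {X : Type} (nxt : X -> (X -> Prop) -> (X -> Prop)) (st : X -> X -> Prop) (x : X) (n : nat) :=
  Nat.iter n (nxt x) (st x).


Lemma chain_facts {X : Type} (T : topology X) (B : (X -> Prop) -> Prop) nxt st x :
  (forall x W, ~ isolated T x -> B W -> W x -> Next B x W (nxt x W)) ->
  (forall x, B (st x) /\ st x x) -> ~ isolated T x ->
  forall n, B (chain nxt st x n) /\ chain nxt st x n x /\ Next B x (chain nxt st x n) (chain nxt st x (S n)).
Proof.
  intros Hn Hs Nx n. induction n as [|n IH].
  - destruct (Hs x) as [Bs sx]. split; [exact Bs|]. split; [exact sx|]. apply Hn; auto.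
  - destruct IH as [Bc [cx HN]]. pose proof HN as [BN [Nxx _]].
    split; [exact BN|]. split; [exact Nxx|]. apply Hn; auto.
Qed.

Lemma chain_decr {X : Type} (T : topology X) (B : (X -> Prop) -> Prop) nxt st x :
  (forall x W, ~ isolated T x -> B W -> W x -> Next B x W (nxt x W)) ->
  (forall x, B (st x) /\ st x x) -> ~ isolated T x ->
  forall i j, i <= j -> subset (chain nxt st x j) (chain nxt st x i).
Proof.
  intros Hn Hs Nx i j Hij. induction Hij as [|j Hij IH].
  - intros w Hw; exact Hw.
  - intros w Hw. apply IH.
    destruct (chain_facts T B nxt st x Hn Hs Nx j) as [_ [_ [_ [_ [HS _]]]]]. apply HS, Hw.
Qed.

Lemma chain_inj {X : Type} (T : topology X) (B : (X -> Prop) -> Prop) nxt st x :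
  (forall x W, ~ isolated T x -> B W -> W x -> Next B x W (nxt x W)) ->
  (forall x, B (st x) /\ st x x) -> ~ isolated T x ->
  forall i j, chain nxt st x i = chain nxt st x j -> i = j.
Proof.
  intros Hn Hs Nx.
  assert (H : forall i j, i < j -> chain nxt st x i <> chain nxt st x j).
  { intros i j Hij He.
    destruct (chain_facts T B nxt st x Hn Hs Nx i) as [_ [_ [_ [_ [_ [HNS _]]]]]].
    apply HNS. rewrite He. apply (chain_decr T B nxt st x Hn Hs Nx (S i) j Hij). }
  intros i j He. destruct (classic (i < j)) as [h|h]; [exfalso; exact (H _ _ h He)|].
  destruct (classic (j < i)) as [h'|h']; [exfalso; exact (H _ _ h' (eq_sym He))| lia].
Qed.

Lemma chain_pigeon {X : Type} (T : topology X) (B : (X -> Prop) -> Prop) nxt st x :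
  (forall x W, ~ isolated T x -> B W -> W x -> Next B x W (nxt x W)) ->
  (forall x, B (st x) /\ st x x) -> ~ isolated T x ->
  forall (L : list (X -> Prop)) n, (forall k, k <= n -> In (chain nxt st x k) L) -> S n <= length L.
Proof.
  intros Hn Hs Nx L n HL.
  assert (Hnd : NoDup (map (chain nxt st x) (seq 0 (S n)))).
  { apply NoDup_map_NoDup_ForallPairs; [|apply seq_NoDup].
    intros a b _ _ He. apply (chain_inj T B nxt st x Hn Hs Nx a b He). }
  pose proof (NoDup_incl_length (l' := L) Hnd) as Hinc.
  rewrite length_map, length_seq in Hinc. apply Hinc.
  intros W HW. apply in_map_iff in HW. destruct HW as [k [<- Hk]].
  apply in_seq in Hk. apply HL. lia.
Qed.

Lemma chain_base {X : Type} (T : topology X) (B : (X -> Prop) -> Prop) nxt st x :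
  T1 T -> regular_base_at_nonisolated T B ->
  (forall x W, ~ isolated T x -> B W -> W x -> Next B x W (nxt x W)) ->
  (forall x, B (st x) /\ st x x) -> ~ isolated T x ->
  forall O, is_open T O -> O x -> exists k, subset (chain nxt st x k) O.
Proof.
  intros H1 Hrb Hn Hs Nx O HO Ox. pose proof Hrb as [[Hbo Hbb] Hr].
  destruct (Hbb O x HO Ox) as [W [BW [Wx WO]]].
  destruct (nonisolated_other T x W Nx (Hbo W BW) Wx) as [y [Wy Hyx]].
  destruct (classic (exists k, subset (chain nxt st x (S k)) W)) as [[k Hk]|Hno].
  { exists (S k). intros w Hw. apply WO, Hk, Hw. }
  assert (HWc : forall k, subset W (chain nxt st x k)).
  { intro k. destruct (chain_facts T B nxt st x Hn Hs Nx k) as [_ [_ [_ [_ [_ [_ HZ]]]]]].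
    destruct (HZ W BW Wx) as [h|h]; [exact h| exfalso; apply Hno; exists k; exact h]. }
  destruct (finite_two T B x y H1 Hrb Nx Hyx) as [L HL].
  exfalso.
  assert (Hp := chain_pigeon T B nxt st x Hn Hs Nx L (length L)).
  assert (S (length L) <= length L); [|lia].
  apply Hp. intros k _. destruct (chain_facts T B nxt st x Hn Hs Nx k) as [Bc [cx _]].
  apply HL; [exact Bc| exact cx| apply HWc, Wy].
Qed.

Lemma chain_bound {X : Type} (T : topology X) (B : (X -> Prop) -> Prop) nxt st :
  T1 T -> regular_base_at_nonisolated T B ->
  (forall x W, ~ isolated T x -> B W -> W x -> Next B x W (nxt x W)) ->
  (forall x, B (st x) /\ st x x) ->
  forall Z, exists N, forall n y, N <= n -> ~ isolated T y -> chain nxt st y n <> Z.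
Proof.
  intros H1 Hrb Hn Hs Z.
  destruct (classic (exists w, Z w /\ ~ isolated T w /\ B Z)) as [[w [Zw [Nw BZ]]]|Hno].
  - destruct (sup_finite T B Z w H1 Hrb BZ Zw Nw) as [L HL].
    exists (length L). intros n y Hn' Ny He.
    assert (Hp := chain_pigeon T B nxt st y Hn Hs Ny L n).
    assert (S n <= length L); [|lia].
    apply Hp. intros k Hk. destruct (chain_facts T B nxt st y Hn Hs Ny k) as [Bc _].
    apply HL; [exact Bc|]. rewrite <- He. apply (chain_decr T B nxt st y Hn Hs Ny k n Hk).
  - exists 0. intros n y _ Ny He. apply Hno. exists y.
    destruct (chain_facts T B nxt st y Hn Hs Ny n) as [Bc [cy _]]. rewrite <- He.
    split; [exact cy|]. split; [exact Ny| exact Bc].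
Qed.

Lemma chain_bound_list {X : Type} (T : topology X) (B : (X -> Prop) -> Prop) nxt st :
  T1 T -> regular_base_at_nonisolated T B ->
  (forall x W, ~ isolated T x -> B W -> W x -> Next B x W (nxt x W)) ->
  (forall x, B (st x) /\ st x x) ->
  forall E, exists N, forall n y, N <= n -> ~ isolated T y -> ~ In (chain nxt st y n) E.
Proof.
  intros H1 Hrb Hn Hs E. induction E as [|Z E [N IH]].
  - exists 0. intros n y _ _ [].
  - destruct (chain_bound T B nxt st H1 Hrb Hn Hs Z) as [N1 HN1].
    exists (Nat.max N N1). intros n y Hle Ny [He|He].
    + apply (HN1 n y ltac:(lia) Ny). symmetry; exact He.
    + apply (IH n y ltac:(lia) Ny He).
Qed.

Lemma gamma_thm {X : Type} (T : topology X) (B : (X -> Prop) -> Prop) :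
  T1 T -> regular_base_at_nonisolated T B -> gamma_space T.
Proof.
  intros H1 Hrb. pose proof Hrb as [[Hbo Hbb] Hr].
  pose (nxt := fun x W => proj1_sig (constructive_indefinite_description _ (next_exists T B H1 Hrb x W))).
  assert (Hn : forall x W, ~ isolated T x -> B W -> W x -> Next B x W (nxt x W)).
  { intros x W. exact (proj2_sig (constructive_indefinite_description _ (next_exists T B H1 Hrb x W))). }
  assert (Hst : forall x, exists W, B W /\ W x).
  { intro x. destruct (Hbb (fun _ => True) x (open_full _ T) I) as [W [BW [Wx _]]]. exists W; auto. }
  pose (st := fun x => proj1_sig (constructive_indefinite_description _ (Hst x))).
  assert (Hs : forall x, B (st x) /\ st x x).
  { intro x. exact (proj2_sig (constructive_indefinite_description _ (Hst x))). }
  exists (fun n x z => (isolated T x /\ z = x) \/ (~ isolated T x /\ chain nxt st x n z)).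
  split.
  - intros n x. destruct (classic (isolated T x)) as [Ix|Nx].
    + split; [|left; auto]. apply (open_ext T (fun z => z = x) _ Ix).
      intro z; split; [intro h; left; auto| intros [[_ h]|[h _]]; [exact h| contradiction]].
    + destruct (chain_facts T B nxt st x Hn Hs Nx n) as [Bc [cx _]].
      split; [|right; auto]. apply (open_ext T _ _ (Hbo _ Bc)).
      intro z; split; [intro h; right; auto| intros [[h _]|[_ h]]; [contradiction| exact h]].
  - intros x xs ys H O HO Ox.
    destruct (classic (isolated T x)) as [Ix|Nx].
    + exists 0. intros n _. destruct (H n) as [Hx Hy].
      destruct Hy as [[_ Hy]|[h _]]; [|contradiction]. rewrite Hy in Hx.
      destruct Hx as [[_ Hx]|[h _]]; [|contradiction]. rewrite Hx; exact Ox.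
    + destruct (Hr x Nx O) as [V [HV [HVx [HVO [E HE]]]]].
      { exists O. split; [exact HO|]. split; [exact Ox| intros w Hw; exact Hw]. }
      destruct (chain_base T B nxt st x H1 Hrb Hn Hs Nx V HV HVx) as [k Hk].
      destruct (chain_bound_list T B nxt st H1 Hrb Hn Hs E) as [N1 HN1].
      exists (Nat.max k N1). intros n Hle. destruct (H n) as [Hx Hy].
      destruct Hy as [[h _]|[_ Hy]]; [contradiction|].
      assert (Vy : V (ys n)).
      { apply Hk. apply (chain_decr T B nxt st x Hn Hs Nx k n ltac:(lia)). exact Hy. }
      destruct Hx as [[_ Hx]|[Ny Hx]].
      * rewrite Hx. apply HVO, Vy.
      * destruct (classic (subset (chain nxt st (ys n) n) O)) as [HS|HS]; [apply HS, Hx|].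
        exfalso. apply (HN1 n (ys n) ltac:(lia) Ny). apply HE.
        destruct (chain_facts T B nxt st (ys n) Hn Hs Ny n) as [Bc [cy _]].
        split; [exact Bc|]. split; [exists (ys n); auto| exact HS].
Qed.

Theorem mainTheorem14 (X : Type) (T : topology X) :
  T1 T ->
  (exists B, regular_base_at_nonisolated T B) ->
  proto_metrizable T /\ gamma_space T.
Proof.
  intros H1 [B Hrb]. split.
  - split; [exact (paracompact_thm T B H1 Hrb)|]. exists B. exact (ortho_thm T B H1 Hrb).
  - exact (gamma_thm T B H1 Hrb).
Qed.
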